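(* A strongly regular Weingarten surface with $\nu_1=f(\nu)$, $\nu_2=g(\nu)$ admits geometric principal parameters which are isothermal (i.e. with $E=G$, $F=0$) if and only if $f'(\nu)+g'(\nu)=0$, i.e. if and only if the mean curvature $H=\frac{f(\nu)+g(\nu)}{2}$ is constant.
   Context: For a surface $x=x(u,v)$ without umbilical points parameterized by principal parameters ($F=M=0$, with $E,F,G$, $L,M,N$ the coefficients of the first and second fundamental forms): $\nu_1=L/E$, $\nu_2=N/G$, $\gamma_1=-\frac{E_v}{2E\sqrt G}$, $\gamma_2=\frac{G_u}{2G\sqrt E}$. The surface is strongly regular if $(\nu_1-\nu_2)\gamma_1\gamma_2\neq0$, with the convention $\nu_1-\nu_2>0$. A strongly regular surface is Weingarten if there exist differentiable $f(\nu),g(\nu)$, $\nu\in\mathcal I\subseteq\mathbb R$, with $f-g>0$, $f'g'\neq0$, and a differentiable $\nu(u,v)\in\mathcal I$ with $\nu_u\nu_v\neq0$, such that $\nu_1=f(\nu)$, $\nu_2=g(\nu)$. With $\Phi$ an antiderivative of $f'/(f-g)$ and $\Psi$ an antiderivative of $g'/(g-f)$, put $\lambda=\ln\sqrt E+\Phi(\nu)$ and $\mu=\ln\sqrt G+\Psi(\nu)$. Principal parameters are geometric principal parameters if $\lambda$ and $\mu$ are constants. *)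

(* Defs.v *)
From Stdlib Require Import Reals.
From Coquelicot Require Import Coquelicot.
Open Scope R_scope.

Definition vec3 := (R * R * R)%type.
Definition v1 (a : vec3) : R := fst (fst a).
Definition v2 (a : vec3) : R := snd (fst a).
Definition v3 (a : vec3) : R := snd a.
Definition dot3 (a b : vec3) : R := v1 a * v1 b + v2 a * v2 b + v3 a * v3 b.
Definition cross3 (a b : vec3) : vec3 :=
  (v2 a * v3 b - v3 a * v2 b, v3 a * v1 b - v1 a * v3 b, v1 a * v2 b - v2 a * v1 b).
Definition scal3 (c : R) (a : vec3) : vec3 := (c * v1 a, c * v2 a, c * v3 a).
Definition norm3 (a : vec3) : R := sqrt (dot3 a a).

Definition open_itv (U : R -> Prop) : Prop :=
  (exists a, U a) /\ open U /\ (forall a b c, U a -> U b -> a <= c <= b -> U c).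
Definition rect (U V : R -> Prop) : R -> R -> Prop := fun u v => U u /\ V v.

Definition pu (h : R -> R -> R) : R -> R -> R := fun u v => Derive (fun s => h s v) u.
Definition pv (h : R -> R -> R) : R -> R -> R := fun u v => Derive (fun t => h u t) v.

Fixpoint Ck (k : nat) (D : R -> R -> Prop) (h : R -> R -> R) : Prop :=
  match k with
  | O => forall u v, D u v -> continuous (fun p : R * R => h (fst p) (snd p)) (u, v)
  | S k' =>
      (forall u v, D u v -> continuous (fun p : R * R => h (fst p) (snd p)) (u, v)) /\
      (forall u v, D u v -> ex_derive (fun s => h s v) u /\ ex_derive (fun t => h u t) v) /\
      Ck k' D (pu h) /\ Ck k' D (pv h)
  end.
Definition smooth2 (D : R -> R -> Prop) (h : R -> R -> R) : Prop := forall k, Ck k D h.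

Definition surf := R -> R -> vec3.
Definition c1 (x : surf) : R -> R -> R := fun u v => v1 (x u v).
Definition c2 (x : surf) : R -> R -> R := fun u v => v2 (x u v).
Definition c3 (x : surf) : R -> R -> R := fun u v => v3 (x u v).
Definition Pu (x : surf) : surf := fun u v => (pu (c1 x) u v, pu (c2 x) u v, pu (c3 x) u v).
Definition Pv (x : surf) : surf := fun u v => (pv (c1 x) u v, pv (c2 x) u v, pv (c3 x) u v).

Definition smooth_surf (D : R -> R -> Prop) (x : surf) : Prop :=
  smooth2 D (c1 x) /\ smooth2 D (c2 x) /\ smooth2 D (c3 x).
Definition regular_surf (D : R -> R -> Prop) (x : surf) : Prop :=
  forall u v, D u v -> cross3 (Pu x u v) (Pv x u v) <> (0, 0, 0).

Definition Ef (x : surf) : R -> R -> R := fun u v => dot3 (Pu x u v) (Pu x u v).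
Definition Ff (x : surf) : R -> R -> R := fun u v => dot3 (Pu x u v) (Pv x u v).
Definition Gf (x : surf) : R -> R -> R := fun u v => dot3 (Pv x u v) (Pv x u v).
Definition unormal (x : surf) : surf := fun u v =>
  scal3 (/ norm3 (cross3 (Pu x u v) (Pv x u v))) (cross3 (Pu x u v) (Pv x u v)).
Definition Lf (x : surf) : R -> R -> R := fun u v => dot3 (Pu (Pu x) u v) (unormal x u v).
Definition Mf (x : surf) : R -> R -> R := fun u v => dot3 (Pv (Pu x) u v) (unormal x u v).
Definition Nf (x : surf) : R -> R -> R := fun u v => dot3 (Pv (Pv x) u v) (unormal x u v).

Definition nu1 (x : surf) : R -> R -> R := fun u v => Lf x u v / Ef x u v.
Definition nu2 (x : surf) : R -> R -> R := fun u v => Nf x u v / Gf x u v.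
Definition gamma1 (x : surf) : R -> R -> R := fun u v =>
  - pv (Ef x) u v / (2 * Ef x u v * sqrt (Gf x u v)).
Definition gamma2 (x : surf) : R -> R -> R := fun u v =>
  pu (Gf x) u v / (2 * Gf x u v * sqrt (Ef x u v)).

Definition principal_params (D : R -> R -> Prop) (x : surf) : Prop :=
  forall u v, D u v -> Ff x u v = 0 /\ Mf x u v = 0.

(* strongly regular: (nu1 - nu2) gamma1 gamma2 <> 0, with convention nu1 - nu2 > 0 *)
Definition strongly_regular (D : R -> R -> Prop) (x : surf) : Prop :=
  forall u v, D u v ->
    nu1 x u v - nu2 x u v > 0 /\ gamma1 x u v <> 0 /\ gamma2 x u v <> 0.

Definition weingarten (D : R -> R -> Prop) (x : surf) (I : R -> Prop)
    (f g : R -> R) (nu : R -> R -> R) : Prop :=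
  (forall t, I t -> ex_derive f t /\ ex_derive g t /\ f t - g t > 0 /\
                    Derive f t * Derive g t <> 0) /\
  (forall u v, D u v ->
     I (nu u v) /\ ex_derive (fun s => nu s v) u /\ ex_derive (fun t => nu u t) v /\
     pu nu u v * pv nu u v <> 0 /\
     nu1 x u v = f (nu u v) /\ nu2 x u v = g (nu u v)).

Definition antiderivative_on (I : R -> Prop) (h Phi : R -> R) : Prop :=
  forall t, I t -> is_derive Phi t (h t).

Definition lambda_f (x : surf) (Phi : R -> R) (nu : R -> R -> R) : R -> R -> R :=
  fun u v => ln (sqrt (Ef x u v)) + Phi (nu u v).
Definition mu_f (x : surf) (Psi : R -> R) (nu : R -> R -> R) : R -> R -> R :=
  fun u v => ln (sqrt (Gf x u v)) + Psi (nu u v).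

Definition geometric_principal (D : R -> R -> Prop) (x : surf)
    (Phi Psi : R -> R) (nu : R -> R -> R) : Prop :=
  principal_params D x /\
  exists cl cm : R, forall u v, D u v ->
    lambda_f x Phi nu u v = cl /\ mu_f x Psi nu u v = cm.

Definition isothermal (D : R -> R -> Prop) (x : surf) : Prop :=
  forall u v, D u v -> Ef x u v = Gf x u v /\ Ff x u v = 0.

Definition param_change (U' U : R -> Prop) (phi : R -> R) : Prop :=
  open_itv U' /\
  (forall s, U' s -> ex_derive phi s /\ Derive phi s <> 0 /\ ex_derive (Derive phi) s) /\
  (forall u, U u <-> exists s, U' s /\ phi s = u).

Definition admits_isothermal_gpp (U V : R -> Prop) (x : surf)
    (nu : R -> R -> R) (Phi Psi : R -> R) : Prop :=
  exists (U' V' : R -> Prop) (phi psi : R -> R),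
    param_change U' U phi /\ param_change V' V psi /\
    geometric_principal (rect U' V') (fun s t => x (phi s) (psi t)) Phi Psi
                        (fun s t => nu (phi s) (psi t)) /\
    isothermal (rect U' V') (fun s t => x (phi s) (psi t)).

(* Main.v *)
Require Import Defs.
From Stdlib Require Import Reals Lra Psatz ClassicalEpsilon.
From Coquelicot Require Import Coquelicot.
Import Defs.
Open Scope R_scope.

Module M_A.

Lemma isd_eq (f : R -> R) t l l' : is_derive f t l -> l = l' -> is_derive f t l'.
Proof. intros H ->; exact H. Qed.

Lemma isd_mult (f g : R -> R) t df dg : is_derive f t df -> is_derive g t dg ->
  is_derive (fun s => f s * g s) t (df * g t + f t * dg).
Proof. intros Hf Hg. apply (is_derive_mult f g t df dg Hf Hg). intros; apply Rmult_comm. Qed.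

Lemma isd_plus (f g : R -> R) t df dg : is_derive f t df -> is_derive g t dg ->
  is_derive (fun s => f s + g s) t (df + dg).
Proof. intros Hf Hg. apply (is_derive_plus f g t df dg Hf Hg). Qed.

Lemma isd_minus (f g : R -> R) t df dg : is_derive f t df -> is_derive g t dg ->
  is_derive (fun s => f s - g s) t (df - dg).
Proof. intros Hf Hg. apply (is_derive_minus f g t df dg Hf Hg). Qed.

Lemma isd_comp (f g : R -> R) t df dg : is_derive f (g t) df -> is_derive g t dg ->
  is_derive (fun s => f (g s)) t (dg * df).
Proof. intros Hf Hg. apply (is_derive_comp f g t df dg Hf Hg). Qed.

Lemma locconst_d0 (h : R -> R) t k d : locally t (fun s => h s = k) -> is_derive h t d -> d = 0.
Proof.
  intros Hl Hd.
  assert (H : is_derive (fun _ => k) t d).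
  { apply (is_derive_ext_loc h). exact Hl. exact Hd. }
  apply is_derive_unique in H. rewrite Derive_const in H. auto.
Qed.

Lemma open_loc (U : R -> Prop) u : open_itv U -> U u -> locally u U.
Proof. intros [_ [Ho _]] Hu. apply Ho, Hu. Qed.

Lemma itv_const (U : R -> Prop) (h : R -> R) : open_itv U ->
  (forall u, U u -> is_derive h u 0) -> forall a b, U a -> U b -> h a = h b.
Proof.
  intros HU Hd.
  assert (K : forall a b, a < b -> U a -> U b -> h a = h b).
  { intros a b Hab Ha Hb. apply (eq_is_derive h a b); [|exact Hab].
    intros t Ht. apply Hd. destruct HU as [_ [_ Hi]]. apply (Hi a b t); auto. }
  intros a b Ha Hb. destruct (Rtotal_order a b) as [H|[H|H]].
  - apply K; auto.
  - subst; auto.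
  - symmetry; apply K; auto.
Qed.

Lemma rect_const (U V : R -> Prop) (h : R -> R -> R) : open_itv U -> open_itv V ->
  (forall u v, rect U V u v -> is_derive (fun s => h s v) u 0) ->
  (forall u v, rect U V u v -> is_derive (fun t => h u t) v 0) ->
  forall u v u' v', rect U V u v -> rect U V u' v' -> h u v = h u' v'.
Proof.
  intros HU HV Hu Hv u v u' v' [H1 H2] [H3 H4].
  transitivity (h u' v).
  - apply (itv_const U (fun s => h s v)); auto. intros w Hw. apply Hu; split; auto.
  - apply (itv_const V (fun t => h u' t)); auto. intros w Hw. apply Hv; split; auto.
Qed.

End M_A.
Import M_A.

Module M_B.

Definition add3 (a b : vec3) : vec3 := (v1 a + v1 b, v2 a + v2 b, v3 a + v3 b).
Definition vd (F : R -> vec3) (t : R) (d : vec3) : Prop :=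
  is_derive (fun s => v1 (F s)) t (v1 d) /\ is_derive (fun s => v2 (F s)) t (v2 d) /\
  is_derive (fun s => v3 (F s)) t (v3 d).

Lemma vd_dot F G t dF dG : vd F t dF -> vd G t dG ->
  is_derive (fun s => dot3 (F s) (G s)) t (dot3 dF (G t) + dot3 (F t) dG).
Proof.
  intros [H1 [H2 H3]] [K1 [K2 K3]].
  pose proof (isd_mult _ _ _ _ _ H1 K1) as P1.
  pose proof (isd_mult _ _ _ _ _ H2 K2) as P2.
  pose proof (isd_mult _ _ _ _ _ H3 K3) as P3.
  pose proof (isd_plus _ _ _ _ _ (isd_plus _ _ _ _ _ P1 P2) P3) as P.
  unfold dot3. eapply isd_eq; [exact P|]. simpl. ring.
Qed.
Lemma gram (a b y z : vec3) :
  dot3 (cross3 a b) (cross3 a b) * dot3 y z =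
  (dot3 y a * dot3 b b - dot3 y b * dot3 a b) * dot3 a z +
  (dot3 y b * dot3 a a - dot3 y a * dot3 a b) * dot3 b z +
  dot3 y (cross3 a b) * dot3 (cross3 a b) z.
Proof.
  destruct a as [[a1 a2] a3]; destruct b as [[b1 b2] b3];
  destruct y as [[y1 y2] y3]; destruct z as [[z1 z2] z3].
  unfold dot3, cross3, v1, v2, v3; simpl. ring.
Qed.

Lemma lagrange (a b : vec3) :
  dot3 (cross3 a b) (cross3 a b) = dot3 a a * dot3 b b - dot3 a b * dot3 a b.
Proof.
  destruct a as [[a1 a2] a3]; destruct b as [[b1 b2] b3].
  unfold dot3, cross3, v1, v2, v3; simpl. ring.
Qed.

Lemma dot3_comm a b : dot3 a b = dot3 b a.
Proof. unfold dot3; ring. Qed.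

Lemma dot3_scal_r k a b : dot3 a (scal3 k b) = k * dot3 a b.
Proof. unfold dot3, scal3, v1, v2, v3; simpl; ring. Qed.

Lemma dot3_self_pos a : a <> (0,0,0) -> 0 < dot3 a a.
Proof.
  destruct a as [[a1 a2] a3]. unfold dot3, v1, v2, v3; simpl. intros H.
  destruct (Req_dec a1 0); destruct (Req_dec a2 0); destruct (Req_dec a3 0); subst;
  try (exfalso; apply H; reflexivity); nra.
Qed.

Lemma norm3_pos a : a <> (0,0,0) -> 0 < norm3 a.
Proof. intros H. unfold norm3. apply sqrt_lt_R0, dot3_self_pos, H. Qed.

Lemma norm3_sq a : norm3 a * norm3 a = dot3 a a.
Proof. unfold norm3. apply sqrt_sqrt. unfold dot3; nra. Qed.

Lemma cross_dot_l a b : dot3 a (cross3 a b) = 0.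
Proof. destruct a as [[a1 a2] a3]; destruct b as [[b1 b2] b3];
  unfold dot3, cross3, v1, v2, v3; simpl; ring. Qed.
Lemma cross_dot_r a b : dot3 b (cross3 a b) = 0.
Proof. destruct a as [[a1 a2] a3]; destruct b as [[b1 b2] b3];
  unfold dot3, cross3, v1, v2, v3; simpl; ring. Qed.

(* Algebraic core of the Codazzi equation *)
Lemma codazzi_alg (a b auu c n nv nu auuv : vec3) (Ev Lv L N E G : R) :
  let W := cross3 a b in
  W <> (0,0,0) ->
  n = scal3 (/ norm3 W) W ->
  E = dot3 a a -> G = dot3 b b -> dot3 a b = 0 ->
  L = dot3 auu n ->
  dot3 b nv = - N -> dot3 a nv = 0 -> dot3 n nv = 0 ->
  dot3 a nu = - L -> dot3 b nu = 0 -> dot3 n nu = 0 ->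
  dot3 auu b = - dot3 a c ->
  Ev = 2 * dot3 a c ->
  Lv = dot3 auuv n + dot3 auu nv ->
  dot3 auuv n = - dot3 c nu ->
  Lv = Ev * (L / E + N / G) / 2.
Proof.
  intros W HW Hn HE HG HF HL Hbnv Hanv Hnnv Hanu Hbnu Hnnu Hauub HEv HLv Hauuv.
  assert (Hw := norm3_pos W HW).
  assert (HWn : forall z, dot3 W z = norm3 W * dot3 n z).
  { intro z. rewrite Hn. rewrite (dot3_comm (scal3 _ _)).
    rewrite dot3_scal_r. rewrite (dot3_comm z). field. lra. }
  assert (HWW : dot3 W W = E * G).
  { unfold W. rewrite lagrange, HF, HE, HG. ring. }
  assert (HE0 : 0 < E).
  { assert (0 < dot3 W W) by (apply dot3_self_pos; exact HW). rewrite HE.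
    unfold dot3; destruct a as [[a1 a2] a3]; unfold v1,v2,v3 in *; simpl in *.
    destruct (Req_dec (a1*a1+a2*a2+a3*a3) 0) as [Z|Z]; [|nra].
    exfalso. assert (a1 = 0) by nra. assert (a2 = 0) by nra. assert (a3=0) by nra.
    subst. unfold W, cross3, dot3, v1, v2, v3 in H; simpl in H. lra. }
  assert (HG0 : 0 < G).
  { assert (0 < dot3 W W) by (apply dot3_self_pos; exact HW). rewrite HWW in H. nra. }
  assert (K1 := gram a b auu nv). fold W in K1.
  rewrite HWW, HWn, Hnnv, Hanv, Hbnv, HF, Hauub, <- HE, <- HG in K1.
  assert (K2 := gram a b c nu). fold W in K2.
  rewrite HWW, HWn, Hnnu, Hanu, Hbnu, HF, <- HE, <- HG in K2.
  rewrite HLv, Hauuv, HEv.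
  rewrite (dot3_comm c a) in K2.
  assert (X1 : dot3 auu nv = dot3 a c * N / G).
  { apply (Rmult_eq_reg_l (E * G)); [|nra]. rewrite K1. field. lra. }
  assert (X2 : dot3 c nu = - dot3 a c * L / E).
  { apply (Rmult_eq_reg_l (E * G)); [|nra]. rewrite K2. field. lra. }
  rewrite X1, X2. field. split; lra.
Qed.

End M_B.
Import M_B.

Module M_C.

Lemma loc_R (P : R -> Prop) x : locally x P -> exists e, 0 < e /\ forall y, Rabs (y - x) < e -> P y.
Proof. intros [e He]. exists e. split; [apply cond_pos|]. intros y Hy. apply He. exact Hy. Qed.

Lemma R_loc (P : R -> Prop) x e : 0 < e -> (forall y, Rabs (y - x) < e -> P y) -> locally x P.
Proof. intros He H. exists (mkposreal e He). intros y Hy. apply H. exact Hy. Qed.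

Lemma loc_impl (P Q : R -> Prop) x : locally x P -> (forall y, P y -> Q y) -> locally x Q.
Proof. intros H K. apply (filter_imp P); auto. Qed.

Lemma rect_loc2d U V u v : open_itv U -> open_itv V -> rect U V u v ->
  locally_2d (rect U V) u v.
Proof.
  intros HU HV [Hu Hv].
  destruct (loc_R _ _ (open_loc U u HU Hu)) as [e1 [He1 K1]].
  destruct (loc_R _ _ (open_loc V v HV Hv)) as [e2 [He2 K2]].
  assert (H : 0 < Rmin e1 e2) by (apply Rmin_pos; auto).
  exists (mkposreal _ H). simpl. intros u' v' H1 H2. split.
  apply K1. eapply Rlt_le_trans; [exact H1|apply Rmin_l].
  apply K2. eapply Rlt_le_trans; [exact H2|apply Rmin_r].
Qed.

Lemma loc2d_impl (P Q : R -> R -> Prop) u v : locally_2d P u v ->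
  (forall a b, P a b -> Q a b) -> locally_2d Q u v.
Proof. intros [d Hd] K. exists d. intros; apply K, Hd; auto. Qed.

Lemma line_u U V u v : open_itv U -> rect U V u v -> locally u (fun s => rect U V s v).
Proof. intros HU [Hu Hv]. apply (loc_impl U); [apply open_loc; auto|]. intros; split; auto. Qed.
Lemma line_v U V u v : open_itv V -> rect U V u v -> locally v (fun t => rect U V u t).
Proof. intros HV [Hu Hv]. apply (loc_impl V); [apply open_loc; auto|]. intros; split; auto. Qed.

Lemma Ck_S k D h : Ck (S k) D h ->
  (forall u v, D u v -> ex_derive (fun s => h s v) u /\ ex_derive (fun t => h u t) v) /\
  Ck k D (pu h) /\ Ck k D (pv h).
Proof. intros [_ [H1 [H2 H3]]]. split; [exact H1|split; assumption]. Qed.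

Lemma Ck_cont k D h : Ck k D h -> forall u v, D u v ->
  continuous (fun p : R * R => h (fst p) (snd p)) (u, v).
Proof. destruct k; [exact (fun H => H)|]. intros [H _]. exact H. Qed.

Lemma exdu D h u v : Ck 1 D h -> D u v -> ex_derive (fun s => h s v) u.
Proof. intros H Hd. exact (proj1 (proj1 (Ck_S 0 D h H) u v Hd)). Qed.
Lemma exdv D h u v : Ck 1 D h -> D u v -> ex_derive (fun t => h u t) v.
Proof. intros H Hd. exact (proj2 (proj1 (Ck_S 0 D h H) u v Hd)). Qed.

Lemma Ck_down k D h : Ck (S k) D h -> Ck k D h.
Proof.
  revert h. induction k; intros h H.
  - destruct H as [H _]. exact H.
  - destruct H as [H1 [H2 [H3 H4]]]. split; [auto|]. split; [auto|].
    split; apply IHk; auto.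
Qed.

Lemma Ck_pu k D h : Ck (S k) D h -> Ck k D (pu h).
Proof. intros H; exact (proj1 (proj2 (Ck_S k D h H))). Qed.
Lemma Ck_pv k D h : Ck (S k) D h -> Ck k D (pv h).
Proof. intros H; exact (proj2 (proj2 (Ck_S k D h H))). Qed.

Lemma schwarz_D U V h u v : open_itv U -> open_itv V -> Ck 2 (rect U V) h ->
  rect U V u v -> pu (pv h) u v = pv (pu h) u v.
Proof.
  intros HU HV H Huv.
  unfold pu, pv. apply Schwarz.
  - apply (loc2d_impl (rect U V)); [apply rect_loc2d; auto|].
    intros a b Hab. repeat split.
    + apply exdu with (D := rect U V); auto. apply Ck_down; auto.
    + apply exdv with (D := rect U V); auto. apply Ck_down; auto.
    + apply (exdu (rect U V) (pv h)); auto. apply Ck_pv; auto.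
    + apply (exdv (rect U V) (pu h)); auto. apply Ck_pu; auto.
  - apply continuity_2d_pt_filterlim.
    apply (Ck_cont 0 (rect U V) (pu (pv h))); auto. apply Ck_pu, Ck_pv, H.
  - apply continuity_2d_pt_filterlim.
    apply (Ck_cont 0 (rect U V) (pv (pu h))); auto. apply Ck_pv, Ck_pu, H.
Qed.

Lemma vd_of (f1 f2 f3 : R -> R) t : ex_derive f1 t -> ex_derive f2 t -> ex_derive f3 t ->
  vd (fun s => (f1 s, f2 s, f3 s)) t (Derive f1 t, Derive f2 t, Derive f3 t).
Proof.
  intros H1 H2 H3. unfold vd, v1, v2, v3; simpl. repeat split; apply Derive_correct; auto.
Qed.

Lemma nrm_exd (a1 a2 a3 b1 b2 b3 : R -> R) t :
  ex_derive a1 t -> ex_derive a2 t -> ex_derive a3 t ->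
  ex_derive b1 t -> ex_derive b2 t -> ex_derive b3 t ->
  cross3 (a1 t, a2 t, a3 t) (b1 t, b2 t, b3 t) <> (0,0,0) ->
  let n := fun s => let W := cross3 (a1 s, a2 s, a3 s) (b1 s, b2 s, b3 s) in
                    scal3 (/ norm3 W) W in
  ex_derive (fun s => v1 (n s)) t /\ ex_derive (fun s => v2 (n s)) t /\
  ex_derive (fun s => v3 (n s)) t.
Proof.
  intros A1 A2 A3 B1 B2 B3 HW n.
  assert (P := dot3_self_pos _ HW).
  assert (Q := norm3_pos _ HW).
  unfold norm3 in Q.
  unfold n, scal3, norm3, cross3, dot3, v1, v2, v3 in *; simpl in *.
  repeat split; auto_derive; unfold Rminus in P; repeat split; try assumption; try (apply Rgt_not_eq, sqrt_lt_R0); lra.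
Qed.

End M_C.
Import M_C.

Module M_D.

Ltac ck Hs := repeat (first [apply Ck_pu | apply Ck_pv]);
  first [apply (proj1 Hs) | apply (proj1 (proj2 Hs)) | apply (proj2 (proj2 Hs))].

Lemma unormal_dot_self x u v : regular_surf (fun _ _ => True) x \/ True -> 
  cross3 (Pu x u v) (Pv x u v) <> (0,0,0) -> dot3 (unormal x u v) (unormal x u v) = 1.
Proof.
  intros _ HW. unfold unormal. set (W := cross3 _ _).
  rewrite dot3_scal_r, dot3_comm, dot3_scal_r. rewrite <- norm3_sq.
  assert (H := norm3_pos W HW). field. lra.
Qed.

Lemma unormal_a x u v : dot3 (Pu x u v) (unormal x u v) = 0.
Proof. unfold unormal. rewrite dot3_scal_r, cross_dot_l. ring. Qed.
Lemma unormal_b x u v : dot3 (Pv x u v) (unormal x u v) = 0.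
Proof. unfold unormal. rewrite dot3_scal_r, cross_dot_r. ring. Qed.

Section Cod.
Variables (U V : R -> Prop) (x : surf).
Hypotheses (HU : open_itv U) (HV : open_itv V) (Hs : smooth_surf (rect U V) x)
  (Hr : regular_surf (rect U V) x) (Hp : principal_params (rect U V) x).

Lemma codazzi_v u v : rect U V u v ->
  is_derive (fun t => Ef x u t) v (pv (Ef x) u v) /\
  is_derive (fun t => Lf x u t) v (pv (Ef x) u v * (nu1 x u v + nu2 x u v) / 2).
Proof.
  intros Huv.
  assert (vdA_v : vd (fun t => Pu x u t) v (Pv (Pu x) u v)).
  { apply vd_of; apply (exdv (rect U V)); auto; ck Hs. }
  assert (vdB_v : vd (fun t => Pv x u t) v (Pv (Pv x) u v)).
  { apply vd_of; apply (exdv (rect U V)); auto; ck Hs. }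
  assert (vdAuu_v : vd (fun t => Pu (Pu x) u t) v (Pv (Pu (Pu x)) u v)).
  { apply vd_of; apply (exdv (rect U V)); auto; ck Hs. }
  assert (vdA_u : vd (fun s => Pu x s v) u (Pu (Pu x) u v)).
  { apply vd_of; apply (exdu (rect U V)); auto; ck Hs. }
  assert (vdB_u : vd (fun s => Pv x s v) u (Pv (Pu x) u v)).
  { replace (Pv (Pu x) u v) with (Pu (Pv x) u v).
    apply vd_of; apply (exdu (rect U V)); auto; ck Hs.
    unfold Pu, Pv; simpl. f_equal; [f_equal|];
      apply (schwarz_D U V); auto; ck Hs. }
  assert (vdC_u : vd (fun s => Pv (Pu x) s v) u (Pv (Pu (Pu x)) u v)).
  { replace (Pv (Pu (Pu x)) u v) with (Pu (Pv (Pu x)) u v).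
    apply vd_of; apply (exdu (rect U V)); auto; ck Hs.
    unfold Pu, Pv; simpl. f_equal; [f_equal|];
      apply (schwarz_D U V); auto; ck Hs. }
  set (nv := (Derive (fun t => v1 (unormal x u t)) v, Derive (fun t => v2 (unormal x u t)) v,
              Derive (fun t => v3 (unormal x u t)) v)).
  set (nu := (Derive (fun s => v1 (unormal x s v)) u, Derive (fun s => v2 (unormal x s v)) u,
              Derive (fun s => v3 (unormal x s v)) u)).
  assert (vdN_v : vd (fun t => unormal x u t) v nv).
  { destruct (nrm_exd (fun t => pu (c1 x) u t) (fun t => pu (c2 x) u t) (fun t => pu (c3 x) u t)
      (fun t => pv (c1 x) u t) (fun t => pv (c2 x) u t) (fun t => pv (c3 x) u t) v)
      as [N1 [N2 N3]];
    try (apply (exdv (rect U V)); auto; ck Hs).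
    apply Hr; auto.
    unfold vd, nv; simpl; repeat split; apply Derive_correct; auto. }
  assert (vdN_u : vd (fun s => unormal x s v) u nu).
  { destruct (nrm_exd (fun s => pu (c1 x) s v) (fun s => pu (c2 x) s v) (fun s => pu (c3 x) s v)
      (fun s => pv (c1 x) s v) (fun s => pv (c2 x) s v) (fun s => pv (c3 x) s v) u)
      as [N1 [N2 N3]];
    try (apply (exdu (rect U V)); auto; ck Hs).
    apply Hr; auto.
    unfold vd, nu; simpl; repeat split; apply Derive_correct; auto. }
  set (a := Pu x u v). set (b := Pv x u v). set (n := unormal x u v).
  set (c := Pv (Pu x) u v). set (auu := Pu (Pu x) u v).
  assert (HM : dot3 c n = 0) by (apply (Hp u v Huv)).
  assert (HF0 : dot3 a b = 0) by (apply (Hp u v Huv)).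
  (* b.n = 0 along v *)
  assert (Hbnv : dot3 b nv = - Nf x u v).
  { assert (K := vd_dot _ _ _ _ _ vdB_v vdN_v).
    apply locconst_d0 with (k := 0) in K.
    unfold Nf. fold n. cbv beta in K; fold n a b c auu in K. lra.
    apply filter_forall. intro t. apply unormal_b. }
  assert (Hanv : dot3 a nv = 0).
  { assert (K := vd_dot _ _ _ _ _ vdA_v vdN_v).
    apply locconst_d0 with (k := 0) in K.
    cbv beta in K; fold n a b c auu in K. lra.
    apply filter_forall. intro t. apply unormal_a. }
  assert (Hnnv : dot3 n nv = 0).
  { assert (K := vd_dot _ _ _ _ _ vdN_v vdN_v).
    apply locconst_d0 with (k := 1) in K.
    cbv beta in K; fold n a b c auu in K. rewrite (dot3_comm nv) in K. lra.
    apply (loc_impl (fun t => rect U V u t)); [apply line_v; auto|].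
    intros t Ht. apply unormal_dot_self; auto. }
  assert (Hanu : dot3 a nu = - Lf x u v).
  { assert (K := vd_dot _ _ _ _ _ vdA_u vdN_u).
    apply locconst_d0 with (k := 0) in K.
    unfold Lf. fold n auu. cbv beta in K; fold n a b c auu in K. lra.
    apply filter_forall. intro t. apply unormal_a. }
  assert (Hbnu : dot3 b nu = 0).
  { assert (K := vd_dot _ _ _ _ _ vdB_u vdN_u).
    apply locconst_d0 with (k := 0) in K.
    cbv beta in K; fold n a b c auu in K. lra.
    apply filter_forall. intro t. apply unormal_b. }
  assert (Hnnu : dot3 n nu = 0).
  { assert (K := vd_dot _ _ _ _ _ vdN_u vdN_u).
    apply locconst_d0 with (k := 1) in K.
    cbv beta in K; fold n a b c auu in K. rewrite (dot3_comm nu) in K. lra.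
    apply (loc_impl (fun s => rect U V s v)); [apply line_u; auto|].
    intros t Ht. apply unormal_dot_self; auto. }
  assert (Hauub : dot3 auu b = - dot3 a c).
  { assert (K := vd_dot _ _ _ _ _ vdA_u vdB_u).
    apply locconst_d0 with (k := 0) in K.
    cbv beta in K; fold n a b c auu in K. lra.
    apply (loc_impl (fun s => rect U V s v)); [apply line_u; auto|].
    intros t Ht. apply (Hp t v Ht). }
  assert (HauuvN : dot3 (Pv (Pu (Pu x)) u v) n = - dot3 c nu).
  { assert (K := vd_dot _ _ _ _ _ vdC_u vdN_u).
    apply locconst_d0 with (k := 0) in K.
    cbv beta in K; fold n a b c auu in K. lra.
    apply (loc_impl (fun s => rect U V s v)); [apply line_u; auto|].
    intros t Ht. apply (Hp t v Ht). }
  assert (HE : is_derive (fun t => Ef x u t) v (2 * dot3 a c)).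
  { assert (K := vd_dot _ _ _ _ _ vdA_v vdA_v). cbv beta in K; fold n a b c auu in K.
    eapply isd_eq; [exact K|]. rewrite (dot3_comm c a). lra. }
  assert (HL : is_derive (fun t => Lf x u t) v
                 (dot3 (Pv (Pu (Pu x)) u v) n + dot3 auu nv)).
  { exact (vd_dot _ _ _ _ _ vdAuu_v vdN_v). }
  assert (HEv : pv (Ef x) u v = 2 * dot3 a c).
  { unfold pv. apply is_derive_unique. exact HE. }
  split.
  - rewrite HEv; exact HE.
  - eapply isd_eq; [exact HL|].
    unfold nu1, nu2.
    eapply (codazzi_alg a b auu c n nv nu (Pv (Pu (Pu x)) u v)); eauto.
Qed.
End Cod.

End M_D.
Import M_D.

Module M_E.

Lemma Ck_T k U V h : Ck k (rect U V) h -> Ck k (rect V U) (fun u v => h v u).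
Proof.
  assert (CT : forall (h : R -> R -> R) (u v : R), (forall u v : R, rect U V u v -> continuous (fun p : R * R => h (fst p) (snd p)) (u, v)) ->
     rect V U u v -> continuous (fun p : R * R => (fun u v => h v u) (fst p) (snd p)) (u, v)).
  { intros h0 u v H [H1 H2].
    apply (continuous_comp_2 snd fst (fun a b => h0 a b) (u, v)).
    apply continuous_snd. apply continuous_fst. apply (H v u). split; auto. }
  revert h. induction k; intros h H.
  - intros u v Huv. apply CT; auto.
  - destruct H as [H1 [H2 [H3 H4]]]. split; [|split; [|split]].
    + intros u v Huv. apply CT; auto.
    + intros u v [Hu Hv]. destruct (H2 v u) as [E1 E2]; [split; auto|]. split; auto.
    + exact (IHk _ H4).
    + exact (IHk _ H3).
Qed.

Definition xT (x : surf) : surf := fun u v => x v u.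

Lemma unormal_T x u v : unormal (xT x) u v = scal3 (-1) (unormal x v u).
Proof.
  unfold unormal. change (Pu (xT x) u v) with (Pv x v u). change (Pv (xT x) u v) with (Pu x v u).
  destruct (Pu x v u) as [[a1 a2] a3]; destruct (Pv x v u) as [[b1 b2] b3].
  assert (Hn : norm3 (cross3 (b1, b2, b3) (a1, a2, a3)) = norm3 (cross3 (a1, a2, a3) (b1, b2, b3))).
  { unfold norm3. f_equal. unfold dot3, cross3, v1, v2, v3; simpl. ring. }
  rewrite Hn. set (k := / norm3 _). unfold scal3, cross3, v1, v2, v3; simpl. f_equal; [f_equal|]; ring.
Qed.

Section T.
Variables (U V : R -> Prop) (x : surf).
Hypotheses (HU : open_itv U) (HV : open_itv V) (Hs : smooth_surf (rect U V) x)
  (Hr : regular_surf (rect U V) x) (Hp : principal_params (rect U V) x).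

Lemma smooth_T : smooth_surf (rect V U) (xT x).
Proof.
  destruct Hs as [S1 [S2 S3]]. split; [|split]; intro k; apply (Ck_T k U V); auto.
Qed.

Lemma regular_T : regular_surf (rect V U) (xT x).
Proof.
  intros u v [H1 H2] HW. apply (Hr v u); [split; auto|].
  change (Pu (xT x) u v) with (Pv x v u) in HW. change (Pv (xT x) u v) with (Pu x v u) in HW.
  destruct (Pu x v u) as [[a1 a2] a3]; destruct (Pv x v u) as [[b1 b2] b3].
  unfold cross3, v1, v2, v3 in *; simpl in *. injection HW; intros.
  f_equal; [f_equal|]; lra.
Qed.

Lemma principal_T : principal_params (rect V U) (xT x).
Proof.
  intros u v [H1 H2]. assert (Huv : rect U V v u) by (split; auto).
  destruct (Hp v u Huv) as [F0 M0]. split.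
  - unfold Ff. change (Pu (xT x) u v) with (Pv x v u). change (Pv (xT x) u v) with (Pu x v u).
    rewrite dot3_comm. exact F0.
  - unfold Mf. rewrite unormal_T, dot3_scal_r.
    change (Pv (Pu (xT x)) u v) with (Pu (Pv x) v u).
    replace (Pu (Pv x) v u) with (Pv (Pu x) v u). unfold Mf in M0. rewrite M0. ring.
    unfold Pu, Pv; simpl. destruct Hs as [S1 [S2 S3]].
    f_equal; [f_equal|]; symmetry; apply (schwarz_D U V); auto.
Qed.

Lemma codazzi_u u v : rect U V u v ->
  is_derive (fun s => Gf x s v) u (pu (Gf x) u v) /\
  is_derive (fun s => Nf x s v) u (pu (Gf x) u v * (nu1 x u v + nu2 x u v) / 2).
Proof.
  intros [H1 H2].
  destruct (codazzi_v V U (xT x) HV HU smooth_T regular_T principal_T v u) as [K1 K2].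
  split; auto.
  split. exact K1.
  assert (EL : forall t, Lf (xT x) v t = - Nf x t v).
  { intro t. unfold Lf, Nf. rewrite unormal_T, dot3_scal_r. change (Pu (Pu (xT x)) v t) with (Pv (Pv x) t v). ring. }
  assert (EN : Nf (xT x) v u = - Lf x u v).
  { unfold Lf, Nf. rewrite unormal_T, dot3_scal_r. change (Pv (Pv (xT x)) v u) with (Pu (Pu x) u v). ring. }
  assert (K3 := is_derive_opp _ _ _ K2). simpl in K3.
  eapply isd_eq.
  - apply (is_derive_ext (fun s => opp (Lf (xT x) v s))); [|exact K3].
    intro t. rewrite EL. simpl. unfold opp; simpl. ring.
  - unfold nu1, nu2 in *. rewrite EN, (EL u).
    change (pv (Ef (xT x)) v u) with (pu (Gf x) u v).
    change (Ef (xT x) v u) with (Gf x u v). change (Gf (xT x) v u) with (Ef x u v).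
    unfold opp; simpl. unfold Rdiv. ring.
Qed.
End T.

End M_E.
Import M_E.

Module M_F.

Lemma Ef_pos D x u v : regular_surf D x -> D u v -> 0 < Ef x u v.
Proof.
  intros Hr Huv. unfold Ef. apply dot3_self_pos. intro Z. apply (Hr u v Huv).
  rewrite Z. destruct (Pv x u v) as [[b1 b2] b3]. unfold cross3, v1, v2, v3; simpl.
  f_equal; [f_equal|]; ring.
Qed.
Lemma Gf_pos D x u v : regular_surf D x -> D u v -> 0 < Gf x u v.
Proof.
  intros Hr Huv. unfold Gf. apply dot3_self_pos. intro Z. apply (Hr u v Huv).
  rewrite Z. destruct (Pu x u v) as [[b1 b2] b3]. unfold cross3, v1, v2, v3; simpl.
  f_equal; [f_equal|]; ring.
Qed.

Lemma is_derive_lnsqrt (h : R -> R) t dh : is_derive h t dh -> 0 < h t ->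
  is_derive (fun s => ln (sqrt (h s))) t (dh / (2 * h t)).
Proof.
  intros H P. assert (Q := sqrt_lt_R0 _ P).
  assert (K1 := is_derive_sqrt h t dh H P).
  assert (K2 := isd_comp ln (fun s => sqrt (h s)) t _ _ (is_derive_ln _ Q) K1).
  eapply isd_eq; [exact K2|]. simpl.
  rewrite <- (sqrt_sqrt (h t)) at 3 by lra. field. lra.
Qed.

Section W.
Variables (U V I : R -> Prop) (x : surf) (f g Phi Psi : R -> R) (nu : R -> R -> R).
Hypotheses (HU : open_itv U) (HV : open_itv V)
  (Hs : smooth_surf (rect U V) x) (Hr : regular_surf (rect U V) x)
  (Hp : principal_params (rect U V) x) (Hsr : strongly_regular (rect U V) x)
  (Hw : weingarten (rect U V) x I f g nu)
  (HPhi : antiderivative_on I (fun t => Derive f t / (f t - g t)) Phi)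
  (HPsi : antiderivative_on I (fun t => Derive g t / (g t - f t)) Psi).

Lemma lambda_v u v : rect U V u v -> is_derive (fun t => lambda_f x Phi nu u t) v 0.
Proof.
  intros Huv.
  destruct (codazzi_v U V x HU HV Hs Hr Hp u v Huv) as [HE HL].
  assert (E0 := Ef_pos _ _ _ _ Hr Huv).
  assert (G0 := Gf_pos _ _ _ _ Hr Huv).
  destruct Hw as [Wf Wnu].
  destruct (Wnu u v Huv) as [In [Nu [Nv [Nuv [N1 N2]]]]].
  destruct (Wf _ In) as [Df [Dg [Dfg Dfg0]]].
  assert (HN := Derive_correct _ _ Nv).
  assert (K1 := is_derive_lnsqrt _ _ _ HE E0).
  assert (K2 := isd_comp Phi (fun t => nu u t) v _ _ (HPhi _ In) HN).
  assert (K3 := is_derive_div _ _ _ _ _ HL HE (Rgt_not_eq _ _ E0)).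
  assert (K4 := isd_comp f (fun t => nu u t) v _ _ (Derive_correct _ _ Df) HN).
  assert (K5 : is_derive (fun t => f (nu u t)) v
     ((pv (Ef x) u v * (nu1 x u v + nu2 x u v) / 2 * Ef x u v - Lf x u v * pv (Ef x) u v) /
        Ef x u v ^ 2)).
  { apply (is_derive_ext_loc (fun t => Lf x u t / Ef x u t)); [|exact K3].
    apply (loc_impl (fun t => rect U V u t)); [apply line_v; auto|].
    intros t Ht. destruct (Wnu u t Ht) as [_ [_ [_ [_ [M1 _]]]]]. rewrite <- M1. reflexivity. }
  cbv beta in K4, K2. assert (EQ := is_derive_unique _ _ _ K4). rewrite (is_derive_unique _ _ _ K5) in EQ.
  unfold lambda_f.
  eapply isd_eq. apply isd_plus; [exact K1| exact K2].
  destruct (Hsr u v Huv) as [S0 _].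
  simpl in EQ.
  set (Ev := pv (Ef x) u v) in *. set (Dn := Derive (fun t => nu u t) v) in *.
  set (E := Ef x u v) in *. set (Lv := Lf x u v) in *.
  replace (Derive (fun t : R_AbsRing => nu u t) v) with Dn by reflexivity.
  replace (Dn * (Derive f (nu u v) / (f (nu u v) - g (nu u v))))
    with ((Dn * Derive f (nu u v)) / (f (nu u v) - g (nu u v))) by (field; lra).
  rewrite <- EQ. rewrite <- N1, <- N2 in *.
  unfold nu1, nu2 in *. fold E Lv in S0 |- *.
  match goal with |- ?a = _ => change (a = 0) end. assert (X : Lv * Gf x u v - Nf x u v * E = (Lv / E - Nf x u v / Gf x u v) * (E * Gf x u v)) by (field; lra). field. rewrite X. split; [lra|]. split; [lra|]. apply Rgt_not_eq. apply Rmult_lt_0_compat; [lra|]. nra.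
Qed.

Lemma mu_u u v : rect U V u v -> is_derive (fun s => mu_f x Psi nu s v) u 0.
Proof.
  intros Huv.
  destruct (codazzi_u U V x HU HV Hs Hr Hp u v Huv) as [HG HN].
  assert (E0 := Ef_pos _ _ _ _ Hr Huv).
  assert (G0 := Gf_pos _ _ _ _ Hr Huv).
  destruct Hw as [Wf Wnu].
  destruct (Wnu u v Huv) as [In [Nu [Nv [Nuv [N1 N2]]]]].
  destruct (Wf _ In) as [Df [Dg [Dfg Dfg0]]].
  assert (HD := Derive_correct _ _ Nu).
  assert (K1 := is_derive_lnsqrt _ _ _ HG G0).
  assert (K2 := isd_comp Psi (fun s => nu s v) u _ _ (HPsi _ In) HD).
  assert (K3 := is_derive_div _ _ _ _ _ HN HG (Rgt_not_eq _ _ G0)).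
  assert (K4 := isd_comp g (fun s => nu s v) u _ _ (Derive_correct _ _ Dg) HD).
  assert (K5 : is_derive (fun s => g (nu s v)) u
     ((pu (Gf x) u v * (nu1 x u v + nu2 x u v) / 2 * Gf x u v - Nf x u v * pu (Gf x) u v) /
        Gf x u v ^ 2)).
  { apply (is_derive_ext_loc (fun s => Nf x s v / Gf x s v)); [|exact K3].
    apply (loc_impl (fun s => rect U V s v)); [apply line_u; auto|].
    intros t Ht. destruct (Wnu t v Ht) as [_ [_ [_ [_ [_ M2]]]]]. rewrite <- M2. reflexivity. }
  cbv beta in K4, K2. assert (EQ := is_derive_unique _ _ _ K4).
  rewrite (is_derive_unique _ _ _ K5) in EQ.
  unfold mu_f.
  eapply isd_eq. apply isd_plus; [exact K1| exact K2].
  destruct (Hsr u v Huv) as [S0 _].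
  simpl in EQ.
  set (Gu := pu (Gf x) u v) in *. set (Dn := Derive (fun s => nu s v) u) in *.
  set (G := Gf x u v) in *. set (Nv' := Nf x u v) in *.
  replace (Derive (fun s : R_AbsRing => nu s v) u) with Dn by reflexivity.
  replace (Dn * (Derive g (nu u v) / (g (nu u v) - f (nu u v))))
    with ((Dn * Derive g (nu u v)) / (g (nu u v) - f (nu u v))) by (field; lra).
  rewrite <- EQ. rewrite <- N1, <- N2 in *.
  unfold nu1, nu2 in *. fold G Nv' in S0 |- *.
  match goal with |- ?a = _ => change (a = 0) end.
  assert (X : Nv' * Ef x u v - Lf x u v * G = - ((Lf x u v / Ef x u v - Nv' / G) * (Ef x u v * G))) by (field; lra).
  field. rewrite X. split; [lra|]. split; [lra|].
  apply Ropp_neq_0_compat. apply Rgt_not_eq. apply Rmult_lt_0_compat; [lra|]. nra.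
Qed.
End W.

End M_F.
Import M_F.

Module M_G.

Section RP.
Variables (U : R -> Prop) (Lam : R -> R).
Hypotheses (HU : open_itv U) (HL : forall u, U u -> ex_derive Lam u).
Variable u0 : R.
Hypothesis Hu0 : U u0.

Definition hh w := exp (Lam w).

Lemma hh_exd w : U w -> ex_derive hh w.
Proof. intros Hw. unfold hh. auto_derive. auto. Qed.

Lemma hh_cont w : U w -> continuous hh w.
Proof. intros Hw. exact (@ex_derive_continuous R_AbsRing R_NormedModule hh w (hh_exd w Hw)). Qed.

Lemma hh_pos w : 0 < hh w.
Proof. apply exp_pos. Qed.

Lemma seg_in a b z : U a -> U b -> Rmin a b <= z <= Rmax a b -> U z.
Proof.
  intros Ha Hb Hz. destruct HU as [_ [_ Hi]].
  unfold Rmin, Rmax in Hz. destruct (Rle_dec a b).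
  - apply (Hi a b); auto.
  - apply (Hi b a); auto.
Qed.

Definition SS b := RInt hh u0 b.

Lemma SS_der b : U b -> is_derive SS b (hh b).
Proof.
  intros Hb. apply (is_derive_RInt hh SS u0 b).
  - apply (loc_impl U); [apply open_loc; auto|]. intros b0 Hb0.
    unfold SS. apply (@RInt_correct R_CompleteNormedModule). apply (@ex_RInt_continuous R_CompleteNormedModule). intros z Hz. apply hh_cont, (seg_in u0 b0); auto.
  - apply hh_cont, Hb.
Qed.

Lemma SS_cont b : U b -> continuity_pt SS b.
Proof.
  intros Hb. apply continuity_pt_filterlim.
  exact (@ex_derive_continuous R_AbsRing R_NormedModule SS b (ex_intro _ _ (SS_der b Hb))).
Qed.

Lemma SS_incr a b : U a -> U b -> a < b -> SS a < SS b.
Proof.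
  intros Ha Hb Hab. apply (incr_function_le SS (Finite a) (Finite b) hh); simpl; auto.
  - intros z H1 H2. apply SS_der. destruct HU as [_ [_ Hi]]. apply (Hi a b); auto.
  - intros; apply hh_pos.
  - lra. - lra.
Qed.

Lemma SS_le_inv a b : U a -> U b -> SS a <= SS b -> a <= b.
Proof.
  intros Ha Hb H. destruct (Rle_dec a b); auto.
  assert (SS b < SS a) by (apply SS_incr; auto; lra). lra.
Qed.

Lemma SS_inj a b : U a -> U b -> SS a = SS b -> a = b.
Proof. intros Ha Hb H. apply Rle_antisym; apply SS_le_inv; auto; lra. Qed.

Definition U' s := exists u, U u /\ SS u = s.
Definition phi s := epsilon (inhabits 0) (fun u => U u /\ SS u = s).

Lemma phi_spec s : U' s -> U (phi s) /\ SS (phi s) = s.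
Proof. intros H. unfold phi. apply epsilon_spec. exact H. Qed.

Lemma phi_SS u : U u -> phi (SS u) = u.
Proof.
  intros Hu. destruct (phi_spec (SS u)) as [H1 H2]. exists u; auto.
  apply SS_inj; auto.
Qed.

Lemma U'_itv a b c : U' a -> U' b -> a <= c <= b -> U' c.
Proof.
  intros [ua [Hua <-]] [ub [Hub <-]] Hc.
  destruct (Req_dec c (SS ua)) as [E|E]; [exists ua; auto|].
  destruct (Req_dec c (SS ub)) as [E'|E']; [exists ub; auto|].
  assert (Hab : ua < ub).
  { destruct (Rlt_le_dec ua ub); auto.
    destruct (Req_dec ua ub); [subst; lra|].
    assert (SS ub < SS ua) by (apply SS_incr; auto; lra). lra. }
  destruct (Ranalysis5.IVT_interv (fun w => SS w - c) ua ub) as [z [Hz Hz']]; auto.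
  - intros w Hw. apply continuity_pt_minus. apply SS_cont.
    destruct HU as [_ [_ Hi]]. apply (Hi ua ub); auto.
    apply continuity_pt_const. intros ? ?; auto.
  - lra. - lra.
  - exists z. split; [|lra]. destruct HU as [_ [_ Hi]]. apply (Hi ua ub); auto.
Qed.

Lemma around u : U u -> exists e, 0 < e /\ U (u - e) /\ U (u + e).
Proof.
  intros Hu. destruct (loc_R _ _ (open_loc U u HU Hu)) as [e [He K]].
  exists (e/2). split; [lra|]. split; apply K.
  replace (u - e / 2 - u) with (- (e/2)) by ring. rewrite Rabs_Ropp, Rabs_pos_eq; lra.
  replace (u + e / 2 - u) with (e/2) by ring. rewrite Rabs_pos_eq; lra.
Qed.

Lemma U'_open : open U'.
Proof.
  intros s [u [Hu <-]].
  destruct (around u Hu) as [e [He [Ha Hb]]].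
  assert (K1 : SS (u - e) < SS u) by (apply SS_incr; auto; lra).
  assert (K2 : SS u < SS (u + e)) by (apply SS_incr; auto; lra).
  apply (R_loc _ _ (Rmin (SS u - SS (u - e)) (SS (u + e) - SS u))).
  apply Rmin_pos; lra.
  intros y Hy. apply (U'_itv (SS (u - e)) (SS (u + e))).
  exists (u - e); auto. exists (u + e); auto.
  assert (A1 := Rmin_l (SS u - SS (u - e)) (SS (u + e) - SS u)).
  assert (A2 := Rmin_r (SS u - SS (u - e)) (SS (u + e) - SS u)).
  apply Rabs_def2 in Hy. lra.
Qed.

Lemma phi_U' s : U' s -> U (phi s).
Proof. intros H; apply phi_spec, H. Qed.

Lemma phi_der s : U' s -> is_derive phi s (/ hh (phi s)).
Proof.
  intros Hs. destruct Hs as [u [Hu Es]].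
  destruct (around u Hu) as [e [He [Ha Hb]]].
  assert (K1 : SS (u - e) < SS u) by (apply SS_incr; auto; lra).
  assert (K2 : SS u < SS (u + e)) by (apply SS_incr; auto; lra).
  assert (Uin : forall w, u - e <= w <= u + e -> U w).
  { intros w Hw. destruct HU as [_ [_ Hi]]. apply (Hi (u - e) (u + e)); auto. }
  assert (Pa : phi (SS (u - e)) = u - e) by (apply phi_SS; auto).
  assert (Pb : phi (SS (u + e)) = u + e) by (apply phi_SS; auto).
  assert (Prf : forall a, phi (SS (u - e)) <= a <= phi (SS (u + e)) -> derivable_pt SS a).
  { intros a Hx. rewrite Pa, Pb in Hx. exists (hh a).
    apply is_derive_Reals, SS_der, Uin, Hx. }
  assert (Ps : phi s = u) by (rewrite <- Es; apply phi_SS; auto).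
  assert (Inc : phi (SS (u - e)) <= phi s <= phi (SS (u + e))) by (rewrite Pa, Pb, Ps; lra).
  assert (CompId : forall y, SS (u - e) <= y <= SS (u + e) -> comp SS phi y = id y).
  { intros y Hy. unfold comp, id. apply phi_spec.
    apply (U'_itv (SS (u - e)) (SS (u + e))); auto. exists (u - e); auto. exists (u + e); auto. }
  assert (Cont : continuity_pt phi s).
  { apply (Ranalysis5.continuity_pt_recip_interv SS phi (u - e) (u + e)).
    - lra.
    - intros a b H1 H2 H3. apply SS_incr; auto; apply Uin; lra.
    - intros y H1 H2. apply CompId; lra.
    - intros y H1 H2.
      assert (Hy : U' y).
      { apply (U'_itv (SS (u - e)) (SS (u + e))); auto. exists (u - e); auto. exists (u + e); auto. }
      destruct (phi_spec y Hy) as [P1 P2].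
      split; apply SS_le_inv; auto; lra.
    - intros a Ha'. apply SS_cont, Uin, Ha'.
    - lra. }
  assert (D := Ranalysis5.derivable_pt_lim_recip_interv SS phi (SS (u - e)) (SS (u + e)) s Prf Cont
     ltac:(lra) ltac:(lra) Inc CompId).
  assert (DV : derive_pt SS (phi s) (Prf (phi s) Inc) = hh (phi s)).
  { apply derive_pt_eq_0. apply is_derive_Reals, SS_der. rewrite Ps; auto. }
  rewrite DV in D. apply is_derive_Reals.
  replace (/ hh (phi s)) with (1 / hh (phi s)) by (unfold Rdiv; ring).
  apply D. assert (0 < hh (phi s)) by apply hh_pos. lra.
Qed.

End RP.

End M_G.
Import M_G.

Module M_H.

Lemma reparam U Lam : open_itv U -> (forall u, U u -> ex_derive Lam u) ->
  exists U' phi, param_change U' U phi /\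
    (forall s, U' s -> U (phi s) /\ is_derive phi s (exp (- Lam (phi s)))).
Proof.
  intros HU HL. destruct HU as [[u0 Hu0] HU2]. assert (HU : open_itv U) by (split; [exists u0|]; auto).
  exists (M_G.U' U Lam u0), (M_G.phi U Lam u0).
  assert (Hd : forall s, M_G.U' U Lam u0 s -> is_derive (M_G.phi U Lam u0) s (exp (- Lam (M_G.phi U Lam u0 s)))).
  { intros s Hs. eapply isd_eq. apply (phi_der U Lam HU HL u0 Hu0); auto. unfold hh. rewrite exp_Ropp. reflexivity. }
  split; [|intros s Hs; split; [apply phi_U'; auto|apply Hd; auto]].
  split; [|split].
  - split; [exists (SS Lam u0 u0); exists u0; auto|]. split.
    + apply (U'_open U Lam HU HL u0 Hu0).
    + intros a b c Ha Hb Hc. apply (U'_itv U Lam HU HL u0 Hu0 a b); auto.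
  - intros s Hs. assert (K := Hd s Hs). split; [eexists; exact K|]. split.
    + rewrite (is_derive_unique _ _ _ K). apply Rgt_not_eq, exp_pos.
    + apply (ex_derive_ext_loc (fun s => exp (- Lam (M_G.phi U Lam u0 s)))).
      * apply (loc_impl (M_G.U' U Lam u0)). apply (U'_open U Lam HU HL u0 Hu0 s Hs).
        intros y Hy. symmetry. apply is_derive_unique, Hd, Hy.
      * assert (Hp : U (M_G.phi U Lam u0 s)) by (apply phi_U'; auto).
        assert (E1 := HL _ Hp). assert (E2 : ex_derive (M_G.phi U Lam u0) s) by (eexists; exact K).
        auto_derive. auto.
  - intros u. split.
    + intros Hu. exists (SS Lam u0 u). split; [exists u; auto|]. apply (phi_SS U Lam HU HL u0 Hu0); auto.
    + intros [s [Hs <-]]. apply (phi_U' U Lam u0); auto.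
Qed.

End M_H.
Import M_H.

Module M_I.

Section Ch.
Variables (U V U' V' : R -> Prop) (phi psi : R -> R) (x : surf).
Hypotheses (HU' : open_itv U') (HV' : open_itv V')
  (Hs : smooth_surf (rect U V) x)
  (Hphi : forall s, U' s -> U (phi s) /\ ex_derive phi s)
  (Hpsi : forall t, V' t -> V (psi t) /\ ex_derive psi t).

Definition ys : surf := fun s t => x (phi s) (psi t).

Lemma rect_map s t : rect U' V' s t -> rect U V (phi s) (psi t).
Proof. intros [H1 H2]. split; [apply Hphi|apply Hpsi]; auto. Qed.

Lemma pu_comp (h : R -> R -> R) s t : Ck 1 (rect U V) h -> rect U' V' s t ->
  pu (fun s t => h (phi s) (psi t)) s t = Derive phi s * pu h (phi s) (psi t).
Proof.
  intros Hh Hst. unfold pu. apply (Derive_comp (fun u => h u (psi t)) phi s).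
  apply (exdu (rect U V)); auto. apply rect_map; auto.
  apply Hphi, Hst.
Qed.

Lemma pv_comp (h : R -> R -> R) s t : Ck 1 (rect U V) h -> rect U' V' s t ->
  pv (fun s t => h (phi s) (psi t)) s t = Derive psi t * pv h (phi s) (psi t).
Proof.
  intros Hh Hst. unfold pv. apply (Derive_comp (fun v => h (phi s) v) psi t).
  apply (exdv (rect U V)); auto. apply rect_map; auto.
  apply Hpsi, Hst.
Qed.

Lemma pvpu_comp (h : R -> R -> R) s t : Ck 2 (rect U V) h -> rect U' V' s t ->
  pv (pu (fun s t => h (phi s) (psi t))) s t =
  Derive phi s * (Derive psi t * pv (pu h) (phi s) (psi t)).
Proof.
  intros Hh Hst. unfold pv at 1.
  rewrite (Derive_ext_loc _ (fun t' => Derive phi s * pu h (phi s) (psi t'))).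
  - rewrite Derive_scal. f_equal.
    apply (pv_comp (pu h) s t); auto. apply Ck_pu; auto.
  - apply (loc_impl (fun t' => rect U' V' s t')). apply line_v; auto.
    intros t' Ht'. apply pu_comp; auto. apply Ck_down; auto.
Qed.

Ltac ck' := repeat (first [apply Ck_pu | apply Ck_pv]);
  first [apply (proj1 Hs) | apply (proj1 (proj2 Hs)) | apply (proj2 (proj2 Hs))].

Lemma Pu_ys s t : rect U' V' s t -> Pu ys s t = scal3 (Derive phi s) (Pu x (phi s) (psi t)).
Proof.
  intros H. unfold Pu, scal3, v1, v2, v3; simpl.
  f_equal; [f_equal|]; apply (pu_comp (fun u v => _ (x u v))); auto; ck'.
Qed.

Lemma Pv_ys s t : rect U' V' s t -> Pv ys s t = scal3 (Derive psi t) (Pv x (phi s) (psi t)).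
Proof.
  intros H. unfold Pv, scal3, v1, v2, v3; simpl.
  f_equal; [f_equal|]; apply (pv_comp (fun u v => _ (x u v))); auto; ck'.
Qed.

Lemma PvPu_ys s t : rect U' V' s t ->
  Pv (Pu ys) s t = scal3 (Derive phi s * Derive psi t) (Pv (Pu x) (phi s) (psi t)).
Proof.
  intros H. unfold Pv at 1. unfold scal3, v1, v2, v3; simpl.
  f_equal; [f_equal|]; rewrite Rmult_assoc; apply (pvpu_comp (fun u v => _ (x u v))); auto; ck'.
Qed.

Lemma Ef_ys s t : rect U' V' s t -> Ef ys s t = Derive phi s ^ 2 * Ef x (phi s) (psi t).
Proof.
  intros H. unfold Ef. rewrite Pu_ys by auto. unfold dot3, scal3, v1, v2, v3; simpl. ring.
Qed.
Lemma Gf_ys s t : rect U' V' s t -> Gf ys s t = Derive psi t ^ 2 * Gf x (phi s) (psi t).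
Proof.
  intros H. unfold Gf. rewrite Pv_ys by auto. unfold dot3, scal3, v1, v2, v3; simpl. ring.
Qed.
Lemma Ff_ys s t : rect U' V' s t -> Ff ys s t = Derive phi s * Derive psi t * Ff x (phi s) (psi t).
Proof.
  intros H. unfold Ff. rewrite Pu_ys, Pv_ys by auto. unfold dot3, scal3, v1, v2, v3; simpl. ring.
Qed.

Lemma Mf_ys s t : rect U' V' s t -> regular_surf (rect U V) x -> Mf x (phi s) (psi t) = 0 ->
  Mf ys s t = 0.
Proof.
  intros H Hr HM. assert (HW := Hr _ _ (rect_map s t H)).
  assert (Hn := norm3_pos _ HW).
  unfold Mf, unormal in *. rewrite PvPu_ys, Pu_ys, Pv_ys by auto.
  set (W := cross3 (Pu x (phi s) (psi t)) (Pv x (phi s) (psi t))) in *.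
  set (C := Pv (Pu x) (phi s) (psi t)) in *.
  rewrite dot3_scal_r in HM.
  assert (HC : dot3 C W = 0).
  { apply (Rmult_eq_reg_l (/ norm3 W)). rewrite HM; ring. apply Rinv_neq_0_compat; lra. }
  set (a := Derive phi s). set (b := Derive psi t).
  replace (cross3 (scal3 a (Pu x (phi s) (psi t))) (scal3 b (Pv x (phi s) (psi t))))
    with (scal3 (a * b) W).
  - rewrite !dot3_scal_r. rewrite (dot3_comm (scal3 _ _)), dot3_scal_r, dot3_comm, HC. ring.
  - unfold W. destruct (Pu x (phi s) (psi t)) as [[a1 a2] a3]; destruct (Pv x (phi s) (psi t)) as [[b1 b2] b3].
    unfold cross3, scal3, v1, v2, v3; simpl. f_equal; [f_equal|]; ring.
Qed.

End Ch.

End M_I.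
Import M_I.

Module M_J.

Ltac ck2 Hs := repeat (first [apply Ck_pu | apply Ck_pv]);
  first [apply (proj1 Hs) | apply (proj1 (proj2 Hs)) | apply (proj2 (proj2 Hs))].

Lemma Ef_exd_u U V x u v : smooth_surf (rect U V) x -> rect U V u v ->
  ex_derive (fun s => Ef x s v) u.
Proof.
  intros Hs Huv.
  assert (K : vd (fun s => Pu x s v) u (Pu (Pu x) u v)).
  { apply vd_of; apply (exdu (rect U V)); auto; ck2 Hs. }
  eexists. exact (vd_dot _ _ _ _ _ K K).
Qed.

Lemma Gf_exd_v U V x u v : smooth_surf (rect U V) x -> rect U V u v ->
  ex_derive (fun t => Gf x u t) v.
Proof.
  intros Hs Huv.
  assert (K : vd (fun t => Pv x u t) v (Pv (Pv x) u v)).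
  { apply vd_of; apply (exdv (rect U V)); auto; ck2 Hs. }
  eexists. exact (vd_dot _ _ _ _ _ K K).
Qed.

Lemma lnsqrt_inj a b : 0 < a -> 0 < b -> ln (sqrt a) = ln (sqrt b) -> a = b.
Proof.
  intros Ha Hb H. apply ln_inv in H; try (apply sqrt_lt_R0; auto).
  apply sqrt_inj; lra.
Qed.

Lemma lnsqrt_scale k E : 0 < k -> 0 < E -> ln (sqrt (k ^ 2 * E)) = ln k + ln (sqrt E).
Proof.
  intros Hk HE. rewrite sqrt_mult_alt by (apply pow_le; lra).
  rewrite <- Rsqr_pow2, sqrt_Rsqr by lra. apply ln_mult; auto. apply sqrt_lt_R0; auto.
Qed.

End M_J.
Import M_J.


Ltac rR := match goal with |- @eq _ ?a ?b => change (@eq R a b) end.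

Theorem corollary4p7 (U V I : R -> Prop) (x : surf) (f g Phi Psi : R -> R) (nu : R -> R -> R) :
  open_itv U -> open_itv V -> open_itv I ->
  smooth_surf (rect U V) x -> regular_surf (rect U V) x ->
  principal_params (rect U V) x -> strongly_regular (rect U V) x ->
  weingarten (rect U V) x I f g nu ->
  antiderivative_on I (fun t => Derive f t / (f t - g t)) Phi ->
  antiderivative_on I (fun t => Derive g t / (g t - f t)) Psi ->
  (admits_isothermal_gpp U V x nu Phi Psi <->
     (forall u v, rect U V u v -> Derive f (nu u v) + Derive g (nu u v) = 0)) /\
  ((forall u v, rect U V u v -> Derive f (nu u v) + Derive g (nu u v) = 0) <->
     (exists H0 : R, forall u v, rect U V u v -> (f (nu u v) + g (nu u v)) / 2 = H0)).
Proof.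
  intros HU HV HI Hs Hr Hp Hsr Hw HPhi HPsi.
  assert (Hw' := Hw). destruct Hw' as [Wf Wnu].
  assert (HU0 := HU). destruct HU0 as [[u0 Hu0] _].
  assert (HV0 := HV). destruct HV0 as [[v0 Hv0] _].
  assert (D00 : rect U V u0 v0) by (split; auto).
  assert (Cu : forall (F : R -> R) u v, rect U V u v -> is_derive F (nu u v) (Derive F (nu u v)) ->
     is_derive (fun s => F (nu s v)) u (Derive (fun s => nu s v) u * Derive F (nu u v))).
  { intros F u v Huv HF. destruct (Wnu u v Huv) as [_ [Nu _]].
    apply (isd_comp F (fun s => nu s v)); auto. apply Derive_correct, Nu. }
  assert (Cv : forall (F : R -> R) u v, rect U V u v -> is_derive F (nu u v) (Derive F (nu u v)) ->
     is_derive (fun t => F (nu u t)) v (Derive (fun t => nu u t) v * Derive F (nu u v))).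
  { intros F u v Huv HF. destruct (Wnu u v Huv) as [_ [_ [Nv _]]].
    apply (isd_comp F (fun t => nu u t)); auto. apply Derive_correct, Nv. }
  assert (Dfd : forall u v, rect U V u v -> is_derive f (nu u v) (Derive f (nu u v)) /\
                                           is_derive g (nu u v) (Derive g (nu u v))).
  { intros u v Huv. destruct (Wnu u v Huv) as [In _]. destruct (Wf _ In) as [Df [Dg _]].
    split; apply Derive_correct; auto. }
  assert (Nz : forall u v, rect U V u v -> Derive (fun s => nu s v) u <> 0 /\ Derive (fun t => nu u t) v <> 0).
  { intros u v Huv. destruct (Wnu u v Huv) as [_ [_ [_ [Nuv _]]]].
    unfold pu, pv in Nuv. split; intro Z; apply Nuv; rewrite Z; ring. }
  assert (Part2 : (forall u v, rect U V u v -> Derive f (nu u v) + Derive g (nu u v) = 0) <->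
     (exists H0 : R, forall u v, rect U V u v -> (f (nu u v) + g (nu u v)) / 2 = H0)).
  { split.
    - intros Hfg.
      assert (Hc : forall u v u' v', rect U V u v -> rect U V u' v' ->
                 (fun u v => f (nu u v) + g (nu u v)) u v = (fun u v => f (nu u v) + g (nu u v)) u' v').
      { apply rect_const; auto.
        - intros u v Huv. destruct (Dfd u v Huv) as [Df Dg].
          eapply isd_eq. apply isd_plus; [apply Cu; auto|apply Cu; auto].
          rR. rewrite <- Rmult_plus_distr_l, (Hfg u v Huv). ring.
        - intros u v Huv. destruct (Dfd u v Huv) as [Df Dg].
          eapply isd_eq. apply isd_plus; [apply Cv; auto|apply Cv; auto].
          rR. rewrite <- Rmult_plus_distr_l, (Hfg u v Huv). ring. }
      exists ((f (nu u0 v0) + g (nu u0 v0)) / 2). intros u v Huv.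
      simpl in Hc. rewrite (Hc u v u0 v0); auto.
    - intros [H0 HH] u v Huv. destruct (Dfd u v Huv) as [Df Dg].
      assert (K := isd_plus _ _ _ _ _ (Cu f u v Huv Df) (Cu g u v Huv Dg)).
      apply locconst_d0 with (k := 2 * H0) in K.
      + rewrite <- Rmult_plus_distr_l in K. apply Rmult_integral in K.
        destruct K as [K|K]; auto. exfalso; apply (proj1 (Nz u v Huv)), K.
      + apply (loc_impl (fun s => rect U V s v)); [apply line_u; auto|].
        intros s Hs'. specialize (HH s v Hs'). lra. }
  split; [|exact Part2].
  split.
  -
    intros [U' [V' [phi [psi [Pc1 [Pc2 [[Hpp [cl [cm Hc]]] Hiso]]]]]]] u v Huv.
    destruct Pc1 as [HU' [Dphi Sphi]]. destruct Pc2 as [HV' [Dpsi Spsi]].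
    destruct Huv as [Hu Hv].
    destruct (proj1 (Sphi u) Hu) as [s [Hs' Es]].
    destruct (proj1 (Spsi v) Hv) as [t [Ht' Et]]. subst u v.
    assert (Hpt : rect U V (phi s) (psi t)) by (split; auto).
    assert (Hloc : locally s (fun s' => Phi (nu (phi s') (psi t)) - Psi (nu (phi s') (psi t)) = cl - cm)).
    { apply (loc_impl U'). apply open_loc; auto. intros s1 Hs1.
      assert (R1 : rect U' V' s1 t) by (split; auto).
      destruct (Hc s1 t R1) as [L1 M1]. destruct (Hiso s1 t R1) as [E1 _].
      unfold lambda_f, mu_f in L1, M1. cbv beta in L1, M1.
      rewrite E1 in L1. lra. }
    destruct (Wnu _ _ Hpt) as [In [Nu _]].
    destruct (Wf _ In) as [_ [_ [Sfg _]]].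
    destruct (Dphi s Hs') as [Ephi [Nphi _]].
    assert (Kn := isd_comp (fun w => nu w (psi t)) phi s _ _ (Derive_correct _ _ Nu) (Derive_correct _ _ Ephi)).
    cbv beta in Kn.
    assert (K := isd_minus _ _ _ _ _ (isd_comp Phi _ s _ _ (HPhi _ In) Kn) (isd_comp Psi _ s _ _ (HPsi _ In) Kn)).
    cbv beta in K.
    apply locconst_d0 with (k := cl - cm) in K; [|exact Hloc].
    assert (Dn := proj1 (Nz _ _ Hpt)).
    replace (Derive (fun s0 : R_AbsRing => nu s0 (psi t)) (phi s)) with (Derive (fun w : R => nu w (psi t)) (phi s)) in K by reflexivity.
    set (A := Derive phi s * Derive (fun w : R => nu w (psi t)) (phi s)) in K.
    assert (HA : A <> 0) by (apply Rmult_integral_contrapositive; auto).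
    assert (X : A * (Derive f (nu (phi s) (psi t)) + Derive g (nu (phi s) (psi t))) = 0).
    { apply (Rmult_eq_reg_r (/ (f (nu (phi s) (psi t)) - g (nu (phi s) (psi t))))).
      rewrite Rmult_0_l, <- K. field. lra.
      apply Rinv_neq_0_compat; lra. }
    apply Rmult_integral in X. destruct X as [X|X]; [contradiction|exact X].
  -
    intros Hfg.
    assert (Hk : forall u v u' v', rect U V u v -> rect U V u' v' ->
       (fun u v => Phi (nu u v) - Psi (nu u v)) u v = (fun u v => Phi (nu u v) - Psi (nu u v)) u' v').
    { apply rect_const; auto.
      - intros u v Huv. destruct (Wnu u v Huv) as [In [Nu _]]. destruct (Wf _ In) as [_ [_ [Sfg _]]].
        eapply isd_eq. apply isd_minus.
        apply (isd_comp Phi (fun s => nu s v) u _ _ (HPhi _ In) (Derive_correct _ _ Nu)).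
        apply (isd_comp Psi (fun s => nu s v) u _ _ (HPsi _ In) (Derive_correct _ _ Nu)).
        rR. replace (Derive g (nu u v)) with (- Derive f (nu u v)) by (specialize (Hfg u v Huv); lra).
        field. lra.
      - intros u v Huv. destruct (Wnu u v Huv) as [In [_ [Nv _]]]. destruct (Wf _ In) as [_ [_ [Sfg _]]].
        eapply isd_eq. apply isd_minus.
        apply (isd_comp Phi (fun t => nu u t) v _ _ (HPhi _ In) (Derive_correct _ _ Nv)).
        apply (isd_comp Psi (fun t => nu u t) v _ _ (HPsi _ In) (Derive_correct _ _ Nv)).
        rR. replace (Derive g (nu u v)) with (- Derive f (nu u v)) by (specialize (Hfg u v Huv); lra).
        field. lra. }
    simpl in Hk.
    set (c0 := Phi (nu u0 v0) - Psi (nu u0 v0)).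
    set (Lam := fun u => lambda_f x Phi nu u v0).
    set (Mu := fun v => mu_f x Psi nu u0 v + c0).
    assert (HLam : forall u, U u -> ex_derive Lam u).
    { intros u Hu. assert (Huv : rect U V u v0) by (split; auto).
      destruct (Wnu u v0 Huv) as [In [Nu _]].
      eexists. unfold Lam, lambda_f. apply isd_plus.
      apply is_derive_lnsqrt. apply Derive_correct. apply (Ef_exd_u U V); auto.
      apply (Ef_pos _ _ _ _ Hr Huv).
      apply (isd_comp Phi (fun s => nu s v0) u _ _ (HPhi _ In) (Derive_correct _ _ Nu)). }
    assert (HMu : forall v, V v -> ex_derive Mu v).
    { intros v Hv. assert (Huv : rect U V u0 v) by (split; auto).
      destruct (Wnu u0 v Huv) as [In [_ [Nv _]]].
      eexists. unfold Mu, mu_f. apply isd_plus. apply isd_plus.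
      apply is_derive_lnsqrt. apply Derive_correct. apply (Gf_exd_v U V); auto.
      apply (Gf_pos _ _ _ _ Hr Huv).
      apply (isd_comp Psi (fun t => nu u0 t) v _ _ (HPsi _ In) (Derive_correct _ _ Nv)).
      apply is_derive_const. }
    destruct (reparam U Lam HU HLam) as [U' [phi [Pc1 Hphi]]].
    destruct (reparam V Mu HV HMu) as [V' [psi [Pc2 Hpsi]]].
    exists U', V', phi, psi. split; [exact Pc1|]. split; [exact Pc2|].
    destruct Pc1 as [HU' _]. destruct Pc2 as [HV' _].
    assert (Hphi' : forall s, U' s -> U (phi s) /\ ex_derive phi s).
    { intros s Hs'. destruct (Hphi s Hs') as [A1 A2]. split; auto. eexists; exact A2. }
    assert (Hpsi' : forall t, V' t -> V (psi t) /\ ex_derive psi t).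
    { intros t Ht. destruct (Hpsi t Ht) as [A1 A2]. split; auto. eexists; exact A2. }
    assert (Dphi : forall s, U' s -> Derive phi s = exp (- Lam (phi s))).
    { intros s Hs'. apply is_derive_unique, Hphi, Hs'. }
    assert (Dpsi : forall t, V' t -> Derive psi t = exp (- Mu (psi t))).
    { intros t Ht. apply is_derive_unique, Hpsi, Ht. }
    assert (LamC : forall u v, rect U V u v -> lambda_f x Phi nu u v = Lam u).
    { intros u v [Hu Hv]. unfold Lam. apply (itv_const V (fun t => lambda_f x Phi nu u t)); auto.
      intros t Ht. apply (lambda_v U V I x f g Phi nu); auto. split; auto. }
    assert (MuC : forall u v, rect U V u v -> mu_f x Psi nu u v = mu_f x Psi nu u0 v).
    { intros u v [Hu Hv]. apply (itv_const U (fun s => mu_f x Psi nu s v)); auto.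
      intros s Hs'. apply (mu_u U V I x f g Psi nu); auto. split; auto. }
    assert (Rm : forall s t, rect U' V' s t -> rect U V (phi s) (psi t)).
    { intros s t [H1 H2]. split; [apply Hphi'|apply Hpsi']; auto. }
    assert (EP : forall s t, rect U' V' s t -> 0 < Ef (ys phi psi x) s t).
    { intros s t Hst. rewrite (Ef_ys U V U' V' phi psi x Hs Hphi' Hpsi' s t Hst).
      apply Rmult_lt_0_compat. apply pow_lt. destruct Hst. rewrite Dphi by auto. apply exp_pos.
      apply (Ef_pos _ _ _ _ Hr (Rm s t Hst)). }
    assert (GP : forall s t, rect U' V' s t -> 0 < Gf (ys phi psi x) s t).
    { intros s t Hst. rewrite (Gf_ys U V U' V' phi psi x Hs Hphi' Hpsi' s t Hst).
      apply Rmult_lt_0_compat. apply pow_lt. destruct Hst. rewrite Dpsi by auto. apply exp_pos.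
      apply (Gf_pos _ _ _ _ Hr (Rm s t Hst)). }
    assert (EE : forall s t, rect U' V' s t ->
       ln (sqrt (Ef (ys phi psi x) s t)) = - Phi (nu (phi s) (psi t))).
    { intros s t Hst. rewrite (Ef_ys U V U' V' phi psi x Hs Hphi' Hpsi' s t Hst).
      assert (Hs1 : U' s) by (destruct Hst; auto).
      rewrite (Dphi s Hs1). rewrite lnsqrt_scale. rewrite ln_exp.
      assert (e := LamC (phi s) (psi t) (Rm s t Hst)). unfold lambda_f in e. lra.
      apply exp_pos. apply (Ef_pos _ _ _ _ Hr (Rm s t Hst)). }
    assert (GG : forall s t, rect U' V' s t ->
       ln (sqrt (Gf (ys phi psi x) s t)) = - c0 - Psi (nu (phi s) (psi t))).
    { intros s t Hst. rewrite (Gf_ys U V U' V' phi psi x Hs Hphi' Hpsi' s t Hst).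
      assert (Ht1 : V' t) by (destruct Hst; auto).
      rewrite (Dpsi t Ht1). rewrite lnsqrt_scale. rewrite ln_exp.
      assert (e := MuC (phi s) (psi t) (Rm s t Hst)). unfold mu_f in e. unfold Mu, mu_f. lra.
      apply exp_pos. apply (Gf_pos _ _ _ _ Hr (Rm s t Hst)). }
    assert (KK : forall s t, rect U' V' s t -> Phi (nu (phi s) (psi t)) - Psi (nu (phi s) (psi t)) = c0).
    { intros s t Hst. unfold c0. apply (Hk _ _ u0 v0); auto. }
    split.
    + split.
      * intros s t Hst. split.
        -- change (Ff (ys phi psi x) s t = 0).
           rewrite (Ff_ys U V U' V' phi psi x Hs Hphi' Hpsi' s t Hst).
           rewrite (proj1 (Hp _ _ (Rm s t Hst))). ring.
        -- apply (Mf_ys U V U' V' phi psi x HV' Hs Hphi' Hpsi' s t Hst Hr).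
           apply (Hp _ _ (Rm s t Hst)).
      * exists 0, (- c0). intros s t Hst. unfold lambda_f, mu_f. cbv beta.
        change (fun s t => x (phi s) (psi t)) with (ys phi psi x).
        rewrite EE, GG by auto. split; ring.
    + intros s t Hst. split.
      * change (Ef (ys phi psi x) s t = Gf (ys phi psi x) s t).
        apply lnsqrt_inj; auto. rewrite EE, GG by auto. specialize (KK s t Hst). lra.
      * change (Ff (ys phi psi x) s t = 0).
        rewrite (Ff_ys U V U' V' phi psi x Hs Hphi' Hpsi' s t Hst).
        rewrite (proj1 (Hp _ _ (Rm s t Hst))). ring.
Qed.
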